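(* Let $T\ge2$ and $N\ge1$ be integers, $\epsilon\in(0,1)$, $\bm\mu\in\mathbb R^N$, $\bm\Sigma=[\sigma_{ij}]\in\mathbb S^N$ with $\bm\Sigma\succ\bm0$, and let $\rho_0=1,\rho_1,\dots,\rho_{T-1}\in\mathbb R$ be such that the symmetric Toeplitz matrix $\mathbf P=[\rho_{|t-s|}]_{s,t=1}^T$ is positive definite. Let $\mathcal P$ be the set of all probability distributions $\mathbb P$ of $(\tilde{\bm r}_1,\dots,\tilde{\bm r}_T)\in\mathbb R^{NT}$ with finite second moments such that $\mathbb E_{\mathbb P}(\tilde r_{t,i})=\mu_i$ and $\mathrm{Cov}_{\mathbb P}(\tilde r_{s,i},\tilde r_{t,j})=\rho_{|t-s|}\sigma_{ij}$ for all $i,j\in\{1,\dots,N\}$, $s,t\in\{1,\dots,T\}$. For $\bm w\in\mathbb R^N_+$ define $$\mathcal G_\epsilon(\bm w)=\sup\Big\{\gamma:\ \mathbb P\Big(\tfrac1T\textstyle\sum_{t=1}^T\big(\bm w^\intercal\tilde{\bm r}_t-\tfrac12(\bm w^\intercal\tilde{\bm r}_t)^2\big)\ge\gamma\Big)\ge1-\epsilon\ \forall\mathbb P\in\mathcal P\Big\}.$$ Let $\bar\rho=\frac{2}{T(T-1)}\sum_{t=1}^{T-1}(T-t)\rho_t$ and define $$\mathcal G'_\epsilon(\bm w)=\frac12\left(1-\left(1-\bm w^\intercal\bm\mu+\sqrt{\frac{(1-\epsilon)(1+(T-1)\bar\rho)}{\epsilon T}}\,\|\bm\Sigma^{1/2}\bm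 w\|\right)^2-\frac{T-1-(T-1)\bar\rho}{\epsilon T}\,\bm w^\intercal\bm\Sigma\bm w\right).$$ If $\bm w\in\mathbb R^N_+$ satisfies $1-\bm w^\intercal\bm\mu>\sqrt{\frac{(1+(T-1)\bar\rho)\epsilon}{(1-\epsilon)T}}\,\|\bm\Sigma^{1/2}\bm w\|$, then $\mathcal G_\epsilon(\bm w)\ge\mathcal G'_\epsilon(\bm w)$.
   Context: $\mathbb S^N$ is the set of real symmetric $N\times N$ matrices; $\bm\Sigma^{1/2}$ is the principal square root; $\|\cdot\|$ is the Euclidean norm. The quantity $\mathcal G'_\epsilon(\bm w)$ is the worst-case growth rate that would be obtained if all autocorrelations $\rho_1,\dots,\rho_{T-1}$ were replaced by the single value $\bar\rho$. *)

(* Defs.v *)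
From HB Require Import structures.
From mathcomp Require Import all_boot all_order all_algebra.
From mathcomp Require Import all_classical all_reals all_analysis.
Set Implicit Arguments. Unset Strict Implicit. Unset Printing Implicit Defensive.
Import Order.TTheory GRing.Theory Num.Theory.
Local Open Scope classical_set_scope.
Local Open Scope ring_scope.

Definition absdiff (s t : nat) : nat := (maxn s t - minn s t)%N.

Definition qform (R : realType) (n : nat) (A : 'M[R]_n) (v : 'cV[R]_n) : R :=
  (v^T *m A *m v) 0 0.

Definition posdef (R : realType) (n : nat) (A : 'M[R]_n) : Prop :=
  A^T = A /\ forall v : 'cV[R]_n, v != 0 -> 0 < qform A v.

(* ||Sigma^{1/2} w|| = sqrt (w^T Sigma w) *)
Definition sqrt_norm (R : realType) (n : nat) (S : 'M[R]_n) (w : 'cV[R]_n) : R :=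
  Num.sqrt (qform S w).

Definition toeplitz (R : realType) (T : nat) (rho : nat -> R) : 'M[R]_T :=
  \matrix_(s < T, t < T) rho (absdiff s t).

Definition dotv (R : realType) (n : nat) (w x : 'cV[R]_n) : R := (w^T *m x) 0 0.

Definition avg_growth (R : realType) (T N : nat) (Om : Type)
    (w : 'cV[R]_N) (r : 'I_T -> 'I_N -> Om -> R) (x : Om) : R :=
  T%:R^-1 * \sum_(t < T)
    (let g := \sum_(i < N) w i 0 * r t i x in g - g ^+ 2 / 2).

(* gamma is a guaranteed level: for every distribution in the ambiguity set
   (realized as the joint law of a family of real random variables r_{t,i}
   with finite second moments on some probability space),
   P(avg_growth >= gamma) >= 1 - eps. *)
Definition feasible_level (R : realType) (T N : nat) (eps : R)
    (mu : 'cV[R]_N) (Sig : 'M[R]_N) (rho : nat -> R) (w : 'cV[R]_N)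
    (gamma : R) : Prop :=
  forall (d : measure_display) (Om : measurableType d) (P : probability Om R)
         (r : 'I_T -> 'I_N -> Om -> R),
    (forall t i, r t i \in Lfun P 2%:E) ->
    (forall t i, ('E_P[r t i] = (mu i 0)%:E)%E) ->
    (forall s t i j, covariance P (r s i) (r t j) =
                     (rho (absdiff s t) * Sig i j)%:E) ->
    ((1 - eps)%:E <= P [set x | (gamma <= avg_growth w r x)%R])%E.

Definition G_eps (R : realType) (T N : nat) (eps : R)
    (mu : 'cV[R]_N) (Sig : 'M[R]_N) (rho : nat -> R) (w : 'cV[R]_N) : \bar R :=
  ereal_sup [set g%:E | g in [set g | feasible_level T eps mu Sig rho w g]].

Definition rho_bar (R : realType) (T : nat) (rho : nat -> R) : R :=
  2 / (T%:R * (T%:R - 1)) * \sum_(1 <= t < T) ((T - t)%:R * rho t).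

Definition G'_eps (R : realType) (T N : nat) (eps : R)
    (mu : 'cV[R]_N) (Sig : 'M[R]_N) (rho : nat -> R) (w : 'cV[R]_N) : R :=
  let rb := rho_bar T rho in
  (1 - (1 - dotv w mu
         + Num.sqrt ((1 - eps) * (1 + (T%:R - 1) * rb) / (eps * T%:R))
           * sqrt_norm Sig w) ^+ 2
     - (T%:R - 1 - (T%:R - 1) * rb) / (eps * T%:R) * qform Sig w) / 2.

(* Main.v *)
Require Import Defs.
From HB Require Import structures.
From mathcomp Require Import all_boot all_order all_algebra.
From mathcomp Require Import all_classical all_reals all_analysis.
From mathcomp Require Import measurable_realfun.
From mathcomp Require Import ring lra.
Import Order.TTheory GRing.Theory Num.Theory.
Local Open Scope ring_scope.
Lemma cs_sum (R : realType) (n : nat) (f : 'I_n -> R) :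
  (\sum_(i < n) f i) * (\sum_(i < n) f i) <= n%:R * \sum_(i < n) f i * f i.
Proof.
have h0 : 0 <= \sum_(s < n) \sum_(t < n) (f s - f t) ^+ 2.
  by apply: sumr_ge0 => s _; apply: sumr_ge0 => t _; exact: sqr_ge0.
have e : \sum_(s < n) \sum_(t < n) (f s - f t) ^+ 2 =
   2 * (n%:R * \sum_(i < n) f i * f i) - 2 * ((\sum_(i < n) f i) * (\sum_(i < n) f i)).
  transitivity (\sum_(s < n) \sum_(t < n) (f s * f s + f t * f t - 2 * (f s * f t))).
    by apply: eq_bigr => s _; apply: eq_bigr => t _; ring.
  under eq_bigr do rewrite sumrB big_split /= sumr_const card_ord -mulr_sumr.
  rewrite sumrB big_split /= sumr_const card_ord big_distrlr /= -mulr_sumr.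
  by rewrite sumrMnl -[(\sum_(i < n) f i * f i) *+ n]mulr_natl; ring.
move: h0; rewrite e subr_ge0 => h; rewrite -(@ler_pM2l _ 2) //.
Qed.
Lemma rev_sum (R : realType) (rho : nat -> R) n :
  \sum_(s < n) rho (n - s)%N = \sum_(1 <= k < n.+1) rho k.
Proof.
elim: n => [|n IH]; first by rewrite big_ord0 big_geq.
rewrite big_ord_recl /= subn0 big_nat_recr //= addrC; congr (_ + _).
rewrite -IH; apply: eq_bigr => i _ /=.
by rewrite /bump /= add1n subSS.
Qed.

Lemma Zs_eq (R : realType) (rho : nat -> R) n :
  \sum_(s < n) \sum_(t < n) rho (absdiff s t) =
  n%:R * rho 0%N + 2 * \sum_(1 <= k < n) (n - k)%:R * rho k.
Proof.
elim: n => [|n IH]; first by rewrite big_ord0 big_geq // mulr0 mul0r addr0.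
rewrite big_ord_recr /=.
under eq_bigr do rewrite big_ord_recr /=.
have a1 (s : 'I_n) : absdiff s n = (n - s)%N.
  by rewrite /absdiff (maxn_idPr (ltnW (ltn_ord s))) (minn_idPl (ltnW (ltn_ord s))).
have a2 (s : 'I_n) : absdiff n s = (n - s)%N.
  by rewrite /absdiff (maxn_idPl (ltnW (ltn_ord s))) (minn_idPr (ltnW (ltn_ord s))).
have a3 : absdiff n n = 0%N by rewrite /absdiff maxnn minnn subnn.
rewrite big_split /= IH big_ord_recr /= a3.
rewrite [\sum_(i < n) rho (absdiff i n)](eq_bigr (fun s : 'I_n => rho (n - s)%N)); last by move=> s _; rewrite a1.
rewrite [\sum_(i < n) rho (absdiff n i)](eq_bigr (fun s : 'I_n => rho (n - s)%N)); last by move=> s _; rewrite a2.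
rewrite rev_sum.
have -> : \sum_(1 <= i < n.+1) (n.+1 - i)%:R * rho i = \sum_(1 <= i < n) (n - i)%:R * rho i + \sum_(1 <= i < n.+1) rho i.
  case: n {IH a1 a2 a3} => [|n]; first by rewrite !big_geq // addr0.
  have e : \sum_(1 <= i < n.+2) (n.+1 - i)%:R * rho i = \sum_(1 <= i < n.+1) (n.+1 - i)%:R * rho i.
    by rewrite big_nat_recr //= subnn mul0r addr0.
  rewrite -e.
  rewrite -big_split /=; apply: eq_big_nat => i /andP[_ hi].
  by rewrite subSn ?(ltnW hi) // -addn1 natrD mulrDl mul1r.
rewrite -[n.+1]addn1 natrD; ring.
Qed.
Lemma core1 (R : realType) (mu b Y M2 : R) : 0 <= mu -> Y * Y <= M2 ->
  0 <= (1 - mu) * (Y * Y) - 2 * b * Y + b * b + mu * M2.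
Proof.
move=> hmu hM.
have -> : (1 - mu) * (Y * Y) - 2 * b * Y + b * b + mu * M2 = (Y - b) ^+ 2 + mu * (M2 - Y * Y) by ring.
apply: addr_ge0; first exact: sqr_ge0.
by apply: mulr_ge0 => //; rewrite subr_ge0.
Qed.

Lemma core2 (R : realType) (mu b u sg Y M2 : R) : 0 < u -> mu * u = u - b -> 0 <= b -> 0 <= mu ->
  u * u + sg <= M2 ->
  (u - b) * (u - b) + mu * sg <= (1 - mu) * (Y * Y) - 2 * b * Y + b * b + mu * M2.
Proof.
move=> hu hmu hb hmu0 hM.
have h1 : mu * (u * u + sg) <= mu * M2 by apply: ler_wpM2l.
suff : (u - b) * (u - b) + mu * sg <= (1 - mu) * (Y * Y) - 2 * b * Y + b * b + mu * (u * u + sg) by lra.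
rewrite -subr_ge0 -(pmulr_rge0 _ hu).
have -> : u * ((1 - mu) * (Y * Y) - 2 * b * Y + b * b + mu * (u * u + sg) - ((u - b) * (u - b) + mu * sg))
   = (u - mu * u) * (Y * Y) - 2 * b * u * Y + u * b * b + (mu * u) * u * u - u * (u - b) * (u - b) by ring.
rewrite hmu.
have -> : (u - (u - b)) * (Y * Y) - 2 * b * u * Y + u * b * b + (u - b) * u * u - u * (u - b) * (u - b) = b * (Y - u) ^+ 2 by ring.
by apply: mulr_ge0 => //; exact: sqr_ge0.
Qed.

Lemma core3 (R : realType) (eps e k v s a : R) : 0 < eps < 1 -> e * k = v ->
  e * e * (1 - eps) = eps * v -> eps * (k * k) = (1 - eps) * v ->
  let u := a + k in let b := a - e in let mu := (u - b) / u in
  (1 - mu) * (a * a + v) - 2 * b * a + b * b + mu * (a * a + v + s)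
   = eps * ((u - b) * (u - b) + mu * (s / eps)).
Proof.
move=> /andP[e0 e1] hek he hk u b mu.
have en : eps != 0 by rewrite gt_eqF.
have -> : eps * ((u - b) * (u - b) + mu * (s / eps)) = eps * ((u - b) * (u - b)) + mu * s.
  by field.
rewrite /u /b.
have -> : a + k - (a - e) = k + e by ring.
suff : e * e + v = eps * ((k + e) * (k + e)) by move=> H; rewrite -/mu; nra.
nra.
Qed.
Lemma params (R : realType) (t eps q ka : R) : 0 < t -> 0 < eps < 1 -> 0 <= q -> 0 < ka ->
  let e := Num.sqrt (ka * eps / ((1 - eps) * t)) * Num.sqrt q in
  let k := Num.sqrt ((1 - eps) * ka / (eps * t)) * Num.sqrt q in
  let v := ka * q / t in
  [/\ 0 <= e, 0 <= k, e * k = v, e * e * (1 - eps) = eps * v & eps * (k * k) = (1 - eps) * v].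
Proof.
move=> t0 /andP[e0 e1] q0 k0 e k v.
have e1' : 0 < 1 - eps by rewrite subr_gt0.
have A : 0 <= ka * eps / ((1 - eps) * t) by apply: divr_ge0; apply: mulr_ge0; apply: ltW.
have B : 0 <= (1 - eps) * ka / (eps * t) by apply: divr_ge0; apply: mulr_ge0; apply: ltW.
have sq := sqr_sqrtr q0.
split.
- by apply: mulr_ge0; apply: sqrtr_ge0.
- by apply: mulr_ge0; apply: sqrtr_ge0.
- rewrite /e /k mulrACA -sqrtrM // -expr2 sq.
  have -> : ka * eps / ((1 - eps) * t) * ((1 - eps) * ka / (eps * t)) = (ka / t) ^+ 2.
    by field; rewrite ?gt_eqF.
  rewrite sqrtr_sqr ger0_norm; last by apply: divr_ge0; apply: ltW.
  by rewrite /v mulrAC.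
- rewrite /e mulrACA -expr2 sqr_sqrtr // -expr2 sq /v.
  by field; rewrite ?gt_eqF.
- rewrite /k mulrACA -expr2 sqr_sqrtr // -expr2 sq /v.
  by field; rewrite ?gt_eqF.
Qed.
Section Gen.
Context d (Om : measurableType d) (R : realType) (P : probability Om R).

Definition Ex (X : Om -> R) : R := fine ('E_P[X])%E.

Lemma L2_L1 X : X \in Lfun P 2%:E -> X \in Lfun P 1.
Proof. apply: Lfun_subset12; exact: fin_num_measure. Qed.

Lemma LD {p} (p1 : (1 <= p)%E) (X Y : Om -> R) : X \in Lfun P p -> Y \in Lfun P p ->
  (fun x => X x + Y x) \in Lfun P p.
Proof. move=> hX hY. exact: (@rpredD _ (hoelder_Lfun__canonical__Algebra_AddClosed P p1) _ _ hX hY). Qed.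

Lemma LZ {p} (p1 : (1 <= p)%E) (k : R) (X : Om -> R) : X \in Lfun P p ->
  (fun x => k * X x) \in Lfun P p.
Proof. move=> hX. exact: (@rpredZ _ _ (hoelder_Lfun__canonical__GRing_SubmodClosed P p1) k _ hX). Qed.

Lemma LC (r : R) (c : R) : (fun _ : Om => c) \in Lfun P r%:E.
Proof. exact: Lfun_cst. Qed.

Lemma Lsum {p} (p1 : (1 <= p)%E) n (F : 'I_n -> Om -> R) : (forall i, F i \in Lfun P p) ->
  (fun x => \sum_(i < n) F i x) \in Lfun P p.
Proof.
elim: n F => [|n IH] F hF.
  under eq_fun do rewrite big_ord0.
  exact: (@rpred0 _ (hoelder_Lfun__canonical__Algebra_AddClosed P p1)).
under eq_fun do rewrite big_ord_recr /=.
exact: (@LD p p1 (fun x => \sum_(i < n) F (widen_ord (leqnSn n) i) x) (F ord_max)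
  (IH (fun i => F (widen_ord (leqnSn n) i)) (fun i => hF _)) (hF _)).
Qed.

Lemma LM X Y : X \in Lfun P 2%:E -> Y \in Lfun P 2%:E -> (fun x => X x * Y x) \in Lfun P 1.
Proof. exact: Lfun2_mul_Lfun1. Qed.

Lemma Ex_fin X : X \in Lfun P 1 -> ('E_P[X])%E = (Ex X)%:E.
Proof. by move=> h; rewrite /Ex fineK // expectation_fin_num. Qed.

Lemma ExD X Y : X \in Lfun P 1 -> Y \in Lfun P 1 -> Ex (fun x => X x + Y x) = Ex X + Ex Y.
Proof.
move=> hX hY; rewrite /Ex (expectationD hX hY) fineD //; exact: expectation_fin_num.
Qed.

Lemma ExZ k X : X \in Lfun P 1 -> Ex (fun x => k * X x) = k * Ex X.
Proof.
move=> hX; rewrite /Ex (_ : (fun x => k * X x) = k \o* X); last by apply/funext=> x /=; rewrite mulrC.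
by rewrite (expectationZl _ hX) fineM // expectation_fin_num. Qed.

Lemma ExC c : Ex (fun _ => c) = c.
Proof. by rewrite /Ex (expectation_cst P c). Qed.

Lemma Exsum n (F : 'I_n -> Om -> R) : (forall i, F i \in Lfun P 1) ->
  Ex (fun x => \sum_(i < n) F i x) = \sum_(i < n) Ex (F i).
Proof.
elim: n F => [|n IH] F hF.
  under eq_fun do rewrite big_ord0. by rewrite big_ord0 ExC.
under eq_fun do rewrite big_ord_recr /=.
rewrite big_ord_recr /= ExD; last exact: hF; last first.
  exact: (Lsum (lexx _) _ (fun i => F (widen_ord (leqnSn n) i)) (fun i => hF _)).
by rewrite (IH (fun i => F (widen_ord (leqnSn n) i))).
Qed.

Lemma Ex_aff k0 k1 k2 k3 X1 X2 X3 : X1 \in Lfun P 1 -> X2 \in Lfun P 1 -> X3 \in Lfun P 1 ->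
  Ex (fun x => k0 + k1 * X1 x + k2 * X2 x + k3 * X3 x) = k0 + k1 * Ex X1 + k2 * Ex X2 + k3 * Ex X3.
Proof.
move=> h1 h2 h3.
have l1 := LZ (lexx _) k1 _ h1; have l2 := LZ (lexx _) k2 _ h2; have l3 := LZ (lexx _) k3 _ h3.
have lc := LC 1 k0.
rewrite ExD //; last by do 2 apply: LD => //.
rewrite ExD //; last by apply: LD.
by rewrite ExD // ExC !ExZ.
Qed.

Lemma L_aff k0 k1 k2 k3 X1 X2 X3 : X1 \in Lfun P 1 -> X2 \in Lfun P 1 -> X3 \in Lfun P 1 ->
  (fun x => k0 + k1 * X1 x + k2 * X2 x + k3 * X3 x) \in Lfun P 1.
Proof.
move=> h1 h2 h3.
have l1 := LZ (lexx _) k1 _ h1; have l2 := LZ (lexx _) k2 _ h2; have l3 := LZ (lexx _) k3 _ h3.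
have lc := LC 1 k0.
apply: LD => //; apply: LD => //; exact: LD.
Qed.

Lemma Lmeas p X : X \in Lfun P p -> measurable_fun setT X.
Proof. by move=> /sub_Lfun_mfun; rewrite inE. Qed.

End Gen.
Arguments Ex {d Om R} P X.
Arguments L2_L1 {d Om R P X}.
Arguments LD {d Om R P p}.
Arguments LZ {d Om R P p}.
Arguments LC {d Om R} P.
Arguments Lsum {d Om R P p}.
Arguments LM {d Om R P X Y}.
Arguments Ex_fin {d Om R P X}.
Arguments ExD {d Om R P X Y}.
Arguments ExZ {d Om R P} k {X}.
Arguments ExC {d Om R} P.
Arguments Exsum {d Om R P n}.
Arguments Ex_aff {d Om R P} k0 k1 k2 k3 {X1 X2 X3}.
Arguments Lmeas {d Om R P p X}.
Arguments L_aff {d Om R P} k0 k1 k2 k3 {X1 X2 X3}.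

Section Model.
Context d (Om : measurableType d) (R : realType) (P : probability Om R).
Context (T N : nat) (w mu : 'cV[R]_N) (Sig : 'M[R]_N) (rho : nat -> R)
  (r : 'I_T -> 'I_N -> Om -> R).
Context (hL2 : forall t i, r t i \in Lfun P 2%:E)
  (hE : forall t i, ('E_P[r t i] = (mu i 0)%:E)%E)
  (hC : forall s t i j, covariance P (r s i) (r t j) = (rho (absdiff s t) * Sig i j)%:E).

Let m := \sum_(i < N) w i 0 * mu i 0.
Let q := \sum_(i < N) \sum_(j < N) w i 0 * w j 0 * Sig i j.
Lemma le12 : (1 <= 2%:E :> \bar R)%E. Proof. by rewrite lee_fin ler1n. Qed.
Definition gg t := fun x => \sum_(i < N) w i 0 * r t i x.

Lemma gg_L2 t : gg t \in Lfun P 2%:E.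
Proof. exact: (Lsum le12 _ (fun i x => w i 0 * r t i x) (fun i => LZ le12 _ _ (hL2 t i))). Qed.

Lemma Ex_r t i : Ex P (r t i) = mu i 0.
Proof. by rewrite /Ex hE. Qed.

Lemma Ex_rr s t i j : Ex P (fun x => r s i x * r t j x) = mu i 0 * mu j 0 + rho (absdiff s t) * Sig i j.
Proof.
have h1 := L2_L1 (hL2 s i); have h2 := L2_L1 (hL2 t j).
have h12 := LM (hL2 s i) (hL2 t j).
have := covarianceE h1 h2 h12; rewrite hC hE hE Ex_fin // => /eqP.
rewrite -EFinM -EFinB eqe => /eqP ->. ring.
Qed.

Lemma Ex_gg t : Ex P (gg t) = m.
Proof.
rewrite /gg Exsum; last by move=> i; exact: (LZ (lexx _) _ _ (L2_L1 (hL2 t i))).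
by apply: eq_bigr => i _; rewrite ExZ ?Ex_r // L2_L1.
Qed.

Lemma Ex_gg2 s t : Ex P (fun x => gg s x * gg t x) = m ^+ 2 + rho (absdiff s t) * q.
Proof.
rewrite (_ : (fun x => gg s x * gg t x) = fun x => \sum_(i < N) \sum_(j < N)
    (w i 0 * w j 0) * (r s i x * r t j x)); last first.
  apply/funext => x; rewrite /gg big_distrlr /=; apply: eq_bigr => i _.
  by apply: eq_bigr => j _; ring.
rewrite Exsum; last first.
  move=> i; exact: (Lsum (lexx _) _ (fun j x => (w i 0 * w j 0) * (r s i x * r t j x))
    (fun j => LZ (lexx _) _ _ (LM (hL2 s i) (hL2 t j)))).
rewrite /m /q expr2 big_distrlr /= mulr_sumr -big_split /=; apply: eq_bigr => i _.
rewrite Exsum; last by move=> j; exact: (LZ (lexx _) _ _ (LM (hL2 s i) (hL2 t j))).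
rewrite mulr_sumr -big_split /=; apply: eq_bigr => j _.
rewrite ExZ ?Ex_rr; [ring | exact: LM].
Qed.

Definition A1 := fun x => \sum_(t < T) gg t x.
Definition B2 := fun x => \sum_(t < T) gg t x * gg t x.
Definition Zs := \sum_(s < T) \sum_(t < T) rho (absdiff s t).

Lemma A1_L2 : A1 \in Lfun P 2%:E.
Proof. exact: (Lsum le12 _ (fun t x => gg t x) (fun t => gg_L2 t)). Qed.

Lemma B2_L1 : B2 \in Lfun P 1.
Proof. exact: (Lsum (lexx _) _ (fun t x => gg t x * gg t x) (fun t => LM (gg_L2 t) (gg_L2 t))). Qed.

Lemma A1A1_L1 : (fun x => A1 x * A1 x) \in Lfun P 1.
Proof. exact: (LM A1_L2 A1_L2). Qed.

Lemma Ex_A1 : Ex P A1 = T%:R * m.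
Proof.
rewrite /A1 Exsum; last by move=> t; exact: (L2_L1 (gg_L2 t)).
under eq_bigr do rewrite Ex_gg.
by rewrite sumr_const card_ord mulr_natl.
Qed.

Lemma absdiff_nn (t : nat) : absdiff t t = 0%N.
Proof. by rewrite /absdiff maxnn minnn subnn. Qed.

Lemma Ex_B2 (h0 : rho 0%N = 1) : Ex P B2 = T%:R * (m ^+ 2 + q).
Proof.
rewrite /B2 Exsum; last by move=> t; exact: (LM (gg_L2 t) (gg_L2 t)).
under eq_bigr do rewrite Ex_gg2 absdiff_nn h0 mul1r.
by rewrite sumr_const card_ord mulr_natl.
Qed.

Lemma Ex_A1A1 : Ex P (fun x => A1 x * A1 x) = T%:R ^+ 2 * m ^+ 2 + q * Zs.
Proof.
rewrite (_ : (fun x => A1 x * A1 x) = fun x => \sum_(s < T) \sum_(t < T) gg s x * gg t x); last first.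
  by apply/funext => x; rewrite /A1 big_distrlr.
rewrite Exsum; last first.
  move=> s; exact: (Lsum (lexx _) _ (fun t x => gg s x * gg t x) (fun t => LM (gg_L2 s) (gg_L2 t))).
under eq_bigr => s _.
  rewrite Exsum; last by move=> t; exact: (LM (gg_L2 s) (gg_L2 t)).
  under eq_bigr do rewrite Ex_gg2.
  over.
under eq_bigr do rewrite big_split /= sumr_const card_ord.
rewrite big_split /= sumr_const card_ord /Zs mulr_sumr.
congr (_ + _); first by rewrite -mulrnA -[m ^+ 2 *+ _]mulr_natl natrM expr2 mulrC.
apply: eq_bigr => s _; rewrite mulr_sumr; apply: eq_bigr => t _; by rewrite mulrC.
Qed.

Lemma qE : qform Sig w = q.
Proof.
rewrite /qform mxE /q exchange_big /=; apply: eq_bigr => j _.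
rewrite mxE big_distrl /=; apply: eq_bigr => i _; rewrite !mxE; ring.
Qed.

Lemma mE : dotv w mu = m.
Proof. by rewrite /dotv mxE; apply: eq_bigr => i _; rewrite mxE. Qed.

Lemma avgE x : avg_growth w r x = (A1 x - B2 x / 2) / T%:R.
Proof.
rewrite /avg_growth /A1 /B2 /gg /=.
rewrite sumrB -mulr_suml mulrC.
by under [X in (_ - X / 2) / _]eq_bigr do rewrite expr2.
Qed.

Lemma qform_ones (T0 : (0 < T)%N) : qform (toeplitz T rho) (const_mx 1) = Zs.
Proof.
rewrite /qform mxE /Zs exchange_big /=; apply: eq_bigr => j _.
rewrite mxE big_distrl /=; apply: eq_bigr => i _; rewrite !mxE; ring.
Qed.

Lemma feasible_r (eps : R) :
  (2 <= T)%N -> 0 < eps < 1 -> posdef Sig -> rho 0%N = 1 -> posdef (toeplitz T rho) ->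
  Num.sqrt ((1 + (T%:R - 1) * rho_bar T rho) * eps / ((1 - eps) * T%:R))
    * sqrt_norm Sig w < 1 - dotv w mu ->
  ((1 - eps)%:E <= P [set x | (G'_eps T eps mu Sig rho w <= avg_growth w r x)%R]%classic)%E.
Proof.
move=> T2 heps [_ Spd] rho0 [_ Tpd] hyp.
have /andP[e0 e1] := heps.
have T0 : (0 < T)%N by apply: leq_trans T2.
have t0 : 0 < T%:R :> R by rewrite ltr0n.
have t1 : T%:R - 1 != 0 :> R.
  by rewrite subr_eq0 pnatr_eq1; apply/eqP => h; rewrite h in T2.
set rb := rho_bar T rho.
set ka := 1 + (T%:R - 1) * rb.
have ZE : Zs = T%:R * ka.
  rewrite /Zs Zs_eq rho0 /ka /rb /rho_bar.
  by field; rewrite t1 gt_eqF.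
have Zpos : 0 < Zs.
  rewrite -(qform_ones T0); apply: Tpd.
  apply/eqP => /matrixP /(_ (Ordinal T0) 0); rewrite !mxE => /eqP.
  by rewrite oner_eq0.
have ka0 : 0 < ka by move: Zpos; rewrite ZE pmulr_rgt0.
case: (eqVneq w 0) => [w0 | wn0].
  have g0 t x : gg t x = 0 by rewrite /gg big1 // => i _; rewrite w0 mxE mul0r.
  have qz : q = 0 by rewrite /q big1 // => i _; rewrite big1 // => j _; rewrite w0 !mxE !mul0r.
  have mz : m = 0 by rewrite /m big1 // => i _; rewrite w0 !mxE !mul0r.
  have G0 : G'_eps T eps mu Sig rho w = 0.
    rewrite /G'_eps /sqrt_norm qE mE qz mz sqrtr0; ring.
  rewrite (_ : [set x | _]%classic = setT); last first.
    apply/seteqP; split => x //= _; rewrite G0 avgE /A1 /B2.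
    under eq_bigr do rewrite g0.
    under [X in (_ - X / 2) / _]eq_bigr do rewrite g0 mulr0.
    by rewrite big1 // subrr mul0r.
  by rewrite probability_setT lee_fin; lra.

have q0 : 0 < q by rewrite -qE; exact: Spd.
have [eg0 kg0 ek ee kk] := @params R T%:R eps q ka t0 heps (ltW q0) ka0.
rewrite /sqrt_norm qE mE -/rb -/ka in hyp.
set e := Num.sqrt (ka * eps / ((1 - eps) * T%:R)) * Num.sqrt q in eg0 ek ee kk hyp.
set k := Num.sqrt ((1 - eps) * ka / (eps * T%:R)) * Num.sqrt q in kg0 ek ee kk.
set v := ka * q / T%:R in ek ee kk.
have v0 : 0 < v by apply: divr_gt0 => //; exact: mulr_gt0.
pose s := q - v.
have s0 : 0 <= s.
  have := Ex_aff 0 0 (-1) T%:R (L2_L1 A1_L2) A1A1_L1 B2_L1.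
  rewrite Ex_A1 Ex_A1A1 (Ex_B2 rho0) ZE => HE.
  have : 0 <= Ex P (fun x => 0 + 0 * A1 x + -1 * (A1 x * A1 x) + T%:R * B2 x).
    apply: fine_ge0; apply: expectation_ge0 => x.
    have := @cs_sum R T (fun t => gg t x); rewrite -/(A1 x) -/(B2 x) => h.
    lra.
  rewrite HE => h.
  have h2 : 0 <= T%:R ^+ 2 * s.
    suff -> : T%:R ^+ 2 * s = 0 + 0 * (T%:R * m) + -1 * (T%:R ^+ 2 * m ^+ 2 + q * (T%:R * ka)) + T%:R * (T%:R * (m ^+ 2 + q)) by [].
    by rewrite /s /v; field; rewrite gt_eqF.
  by move: h2; rewrite pmulr_rge0 // exprn_gt0.

set a := 1 - m in hyp.
pose u := a + k; pose b := a - e; pose mu' := (u - b) / u.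
have u0 : 0 < u by rewrite /u; lra.
have b0 : 0 < b by rewrite /b subr_gt0.
have ep : 0 < e.
  rewrite lt_neqAle eg0 andbT; apply/eqP => he; move: ek; rewrite -he mul0r => hv.
  by move: v0; rewrite -hv ltxx.
have ub : u - b = k + e by rewrite /u /b; ring.
have mu0 : 0 <= mu' by apply: divr_ge0; rewrite ?ub; lra.
have muu : mu' * u = u - b by rewrite /mu' divfK // gt_eqF.
pose D := (u - b) * (u - b) + mu' * (s / eps).
have D0 : 0 < D.
  have ke : 0 < k + e by lra.
  rewrite /D ub; apply: (lt_le_trans (mulr_gt0 ke ke)); rewrite lerDl.
  by apply: mulr_ge0 => //; apply: divr_ge0 => //; exact: ltW.
pose hA := fun x => (1 - b) ^+ 2 + (2 * b - 2) / T%:R * A1 x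
   + (1 - mu') / T%:R ^+ 2 * (A1 x * A1 x) + mu' / T%:R * B2 x.
have hAE x : hA x = (1 - mu') * ((1 - A1 x / T%:R) * (1 - A1 x / T%:R)) - 2 * b * (1 - A1 x / T%:R)
   + b * b + mu' * (1 - 2 * A1 x / T%:R + B2 x / T%:R).
  by rewrite /hA; field; rewrite gt_eqF.
have cs x : A1 x * A1 x <= T%:R * B2 x by exact: (@cs_sum R T (fun t => gg t x)).
have YM x : (1 - A1 x / T%:R) * (1 - A1 x / T%:R) <= 1 - 2 * A1 x / T%:R + B2 x / T%:R.
  rewrite -subr_ge0.
  have -> : 1 - 2 * A1 x / T%:R + B2 x / T%:R - (1 - A1 x / T%:R) * (1 - A1 x / T%:R)
     = (T%:R * B2 x - A1 x * A1 x) / T%:R ^+ 2 by field; rewrite gt_eqF.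
  apply: divr_ge0; first by rewrite subr_ge0.
  by rewrite exprn_ge0 // ltW.
have hA0 x : 0 <= hA x by rewrite hAE; apply: core1 => //.
have G'E : G'_eps T eps mu Sig rho w = (1 - u * u - s / eps) / 2.
  rewrite /G'_eps /sqrt_norm qE mE -/rb -/ka -/k /u /a /s /v.
  rewrite /ka; by field; rewrite !gt_eqF.
have hAbad x : avg_growth w r x < G'_eps T eps mu Sig rho w -> D <= hA x.
  rewrite avgE G'E => hb.
  have hM : u * u + s / eps <= 1 - 2 * A1 x / T%:R + B2 x / T%:R.
    have : (A1 x - B2 x / 2) / T%:R = (1 - (1 - 2 * A1 x / T%:R + B2 x / T%:R)) / 2.
      by field; rewrite gt_eqF.
    lra.
  rewrite hAE /D; exact: (@core2 R mu' b u (s / eps) _ _ u0 muu (ltW b0) mu0 hM).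
have hAL : hA \in Lfun P 1.
  exact: (L_aff _ _ _ _ (L2_L1 A1_L2) A1A1_L1 B2_L1).
have EhA : Ex P hA = eps * D.
  rewrite /hA Ex_aff ?(L2_L1 A1_L2) ?A1A1_L1 ?B2_L1 // Ex_A1 Ex_A1A1 (Ex_B2 rho0) ZE.
  have H : (1 - mu') * (a * a + v) - 2 * b * a + b * b + mu' * (a * a + v + s) = eps * D
    := @core3 R eps e k v s a heps ek ee kk.
  by rewrite -H /a /s /v /ka; field; rewrite gt_eqF.
set G' := G'_eps T eps mu Sig rho w in hAbad *.
set bad := [set x | avg_growth w r x < G']%classic.
have mavg : measurable_fun setT (avg_growth w r).
  have hL : (fun x => 0 + T%:R^-1 * A1 x + (- (T%:R^-1 / 2)) * B2 x + 0 * B2 x) \in Lfun P 1.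
    exact: (L_aff _ _ _ _ (L2_L1 A1_L2) B2_L1 B2_L1).
  rewrite (_ : avg_growth w r = fun x => 0 + T%:R^-1 * A1 x + (- (T%:R^-1 / 2)) * B2 x + 0 * B2 x).
    exact: Lmeas hL.
  by apply/funext => x; rewrite avgE; field; rewrite gt_eqF.
have mbad : measurable bad.
  have h := @measurable_lte _ Om R setT measurableT (EFin \o avg_growth w r) (cst G'%:E).
  rewrite setTI in h.
  rewrite (_ : bad = [set x | ((EFin \o avg_growth w r) x < cst G'%:E x)%E]%classic); last first.
    by apply/seteqP; split => x /=; rewrite lte_fin.
  by apply: h; [exact/measurable_EFinP | exact: measurable_cst].
have Pbad : (P bad <= eps%:E)%E.
  have hf : (fun x => D^-1 * hA x) \in Lfun P 1 by exact: (LZ (lexx _) _ _ hAL).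
  rewrite -(expectation_indic P mbad).
  apply: (le_trans (expectation_le _ _ _ _ _)).
  - exact: measurable_indic.
  - exact: Lmeas hf.
  - by move=> x; rewrite indicE ler0n.
  - move=> x; apply: mulr_ge0 => //; rewrite invr_ge0; exact: ltW.
  - apply: aeW => x; rewrite indicE; case: (boolP (x \in bad)) => hx.
      rewrite -(@ler_pM2l _ D) // mulr1 mulrA mulfV ?gt_eqF // mul1r.
      by apply: hAbad; move: hx; rewrite inE.
    by apply: mulr_ge0 => //; rewrite invr_ge0; exact: ltW.
  rewrite Ex_fin // ExZ // EhA lee_fin mulrA mulrC mulrA mulfV ?gt_eqF // mul1r.
  done.
rewrite (_ : [set x | (G' <= avg_growth w r x)%R]%classic = (~` bad)%classic).
  rewrite probability_setC // EFinB; apply: leeB => //.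
apply/seteqP; split => x /=.
  by move=> h1 h2; move: h1; rewrite leNgt h2.
by move=> h; rewrite leNgt; apply/negP.
Qed.

End Model.
Theorem proposition5p2 (R : realType) (T N : nat) (eps : R)
    (mu : 'cV[R]_N) (Sig : 'M[R]_N) (rho : nat -> R) (w : 'cV[R]_N) :
  (2 <= T)%N -> (1 <= N)%N ->
  0 < eps < 1 ->
  posdef Sig ->
  rho 0%N = 1 ->
  posdef (toeplitz T rho) ->
  (forall i, 0 <= w i 0) ->
  Num.sqrt ((1 + (T%:R - 1) * rho_bar T rho) * eps / ((1 - eps) * T%:R))
    * sqrt_norm Sig w < 1 - dotv w mu ->
  ((G'_eps T eps mu Sig rho w)%:E <= G_eps T eps mu Sig rho w)%E.
Proof.
move=> T2 N1 heps Spd rho0 Tpd w0 hyp.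
rewrite /G_eps; apply: ereal_sup_ubound; exists (G'_eps T eps mu Sig rho w) => //.
move=> d Om P r hL2 hE hC.
exact: (@feasible_r d Om R P T N w mu Sig rho r hL2 hE hC eps T2 heps Spd rho0 Tpd hyp).
Qed.
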